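(* Let $W$ be a weighing matrix of order $n$ and weight $k$ with $i$-th column $w_i$, and set $C_i=w_iw_i^T$ for $1\le i\le n$. Let $t\ge n$ and let $L=(l(i,j))_{i,j=1}^t$ be a Latin square of side $t$ on the symbol set $\{1,\dots,t\}$. If $t>n$, set $C_i=O$ (the $n\times n$ zero matrix) for $n+1\le i\le t$. Then the $tn\times tn$ block matrix $\widetilde W=(C_{l(i,j)})_{i,j=1}^t$, whose $(i,j)$ block is $C_{l(i,j)}$, is a weighing matrix of order $tn$ and weight $k^2$.
   Context: A weighing matrix of order $n$ and weight $k$ is an $n\times n$ matrix $W$ with entries in $\{1,-1,0\}$ such that $WW^T=kI_n$. A Latin square of side $t$ on symbol set $\{1,\dots,t\}$ is a $t\times t$ array in which each cell contains one symbol and each symbol occurs exactly once in each row and exactly once in each column. *)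

(* Defs.v *)
From mathcomp Require Import all_boot all_order all_algebra.
Set Implicit Arguments. Unset Strict Implicit. Unset Printing Implicit Defensive.
Import GRing.Theory Num.Theory.
Local Open Scope ring_scope.

Definition is_weighing (m : nat) (M : 'M[int]_m) (k : nat) : Prop :=
  (forall i j, M i j \in [:: 1; -1; 0]) /\ M *m M^T = (k%:Z)%:M.

(* Latin square of side t, symbols {1..t} encoded as 'I_t (symbol s <-> s+1):
   each symbol occurs exactly once in each row and in each column. *)
Definition latin_square (t : nat) (L : 'M['I_t]_t) : Prop :=
  (forall i s, #|[set j | L i j == s]| = 1%N) /\
  (forall j s, #|[set i | L i j == s]| = 1%N).

Definition Cmat (n : nat) (W : 'M[int]_n) (s : nat) : 'M[int]_n :=
  match (insub s : option 'I_n) with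
  | Some c => col c W *m (col c W)^T
  | None => 0
  end.

Lemma blk_lt (t n : nat) (p : 'I_(t * n)) : (p %/ n < t)%N.
Proof.
case: n p => [|n] [p hp] /=; first by rewrite muln0 in hp.
by rewrite ltn_divLR.
Qed.

Lemma inn_lt (t n : nat) (p : 'I_(t * n)) : (p %% n < n)%N.
Proof.
case: n p => [|n] [p hp] /=; first by rewrite muln0 in hp.
by rewrite ltn_mod.
Qed.

(* Row/column index p of the tn x tn matrix is p = i*n + a with block index
   i = p %/ n and inner index a = p %% n. *)
Definition blockW (n t : nat) (W : 'M[int]_n) (L : 'M['I_t]_t) : 'M[int]_(t * n) :=
  \matrix_(p, q)
    Cmat W (L (Ordinal (blk_lt p)) (Ordinal (blk_lt q)))
      (Ordinal (inn_lt p)) (Ordinal (inn_lt q)).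

(* Main.v *)
Require Import Defs.
From mathcomp Require Import all_boot all_order all_algebra.
From mathcomp Require Import ring.
Set Implicit Arguments. Unset Strict Implicit. Unset Printing Implicit Defensive.
Import GRing.Theory Num.Theory.
Local Open Scope ring_scope.

Lemma col_orth (n k : nat) (W : 'M[int]_n) :
  W *m W^T = (k%:Z)%:M -> W^T *m W = (k%:Z)%:M.
Proof.
move=> H.
have [k0|kP] := eqVneq k 0%N.
  subst k.
  have W0 : W = 0.
    apply/matrixP => i j; rewrite mxE.
    have := congr1 (fun M : 'M[int]_n => M i i) H; rewrite !mxE eqxx mulr1n.
    move=> /eqP; rewrite psumr_eq0 => [/allP Hall|]; last by move=> l _; rewrite mxE -expr2 sqr_ge0.
    have := Hall j (mem_index_enum _); rewrite /= mxE -expr2 sqrf_eq0 => /eqP //.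
  by rewrite W0 mulmx0; apply/matrixP=> i j; rewrite !mxE mul0rn.
pose V := map_mx (intr : int -> rat) W.
have HV : V *m ((k%:R : rat)^-1 *: V^T) = 1%:M.
  rewrite -scalemxAr /V map_trmx -map_mxM H map_scalar_mx /= -scalemx1 scalerA.
  by rewrite mulVf ?scale1r // pnatr_eq0.
have := mulmx1C HV; rewrite -scalemxAl => H2.
have H3 : V^T *m V = (k%:R : rat) *: 1%:M.
  by rewrite -H2 scalerA divff ?scale1r // pnatr_eq0.
apply/matrixP => i j.
have := congr1 (fun M : 'M[rat]_n => M i j) H3.
rewrite /V map_trmx -map_mxM !mxE => /eqP.
move=> /eqP E; apply: (@intr_inj rat); rewrite E rmorphMn /= mulr_natr.
by [].
Qed.

Lemma CmatE (n : nat) (W : 'M[int]_n) (s : nat) a b :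
  Cmat W s a b = if (insub s : option 'I_n) is Some x then W a x * W b x else 0.
Proof.
rewrite /Cmat; case: insubP => [x _ _|_]; last by rewrite mxE.
by rewrite !mxE big_ord1 !mxE.
Qed.

Lemma key (n k : nat) (W : 'M[int]_n) (s u : nat) a b :
  W^T *m W = (k%:Z)%:M ->
  \sum_c Cmat W s a c * Cmat W u b c =
  if s == u then (if (insub s : option 'I_n) is Some x then k%:Z * (W a x * W b x) else 0) else 0.
Proof.
move=> H.
under eq_bigr do rewrite !CmatE.
case: insubP => [x _ sx|_]; last first.
  by rewrite big1 ?if_same // => c _; rewrite mul0r.
case: (insubP _ u) => [y _ uy|Nu]; last first.
  rewrite big1; last by move=> c _; rewrite mulr0.
  case: eqP => // su; move: Nu; rewrite -su -sx ltn_ord //.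
have E : \sum_c W a x * W c x * (W b y * W c y) = W a x * W b y * (W^T *m W) x y.
  rewrite mxE big_distrr /=; apply: eq_bigr => c _; rewrite mxE; ring.
rewrite E H mxE -sx -uy (inj_eq val_inj).
case: eqP => [->|_]; last by rewrite mulr0n mulr0.
by rewrite mulr1n mulrC.
Qed.

Lemma mk_lt (t n : nat) (j : 'I_t) (c : 'I_n) : (j * n + c < t * n)%N.
Proof.
have := ltn_ord j; have := ltn_ord c => hc hj.
apply: (@leq_trans (j.+1 * n)); first by rewrite mulSn addnC ltn_add2r.
by rewrite leq_mul2r hj orbT.
Qed.

Definition mk (t n : nat) (j : 'I_t) (c : 'I_n) : 'I_(t * n) := Ordinal (mk_lt j c).

Lemma mk_div (t n : nat) (j : 'I_t) (c : 'I_n) : ((j * n + c) %/ n = j)%N.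
Proof. have hn : (0 < n)%N by case: c => c /= /(leq_ltn_trans (leq0n c)).
by rewrite divnMDl // divn_small ?addn0. Qed.

Lemma mk_mod (t n : nat) (j : 'I_t) (c : 'I_n) : ((j * n + c) %% n = c)%N.
Proof. by rewrite modnMDl modn_small. Qed.

Lemma sum_split (t n : nat) (F : 'I_(t * n) -> int) :
  \sum_r F r = \sum_(j < t) \sum_(c < n) F (mk j c).
Proof.
rewrite pair_big /=.
rewrite (reindex (fun x : 'I_t * 'I_n => mk x.1 x.2)) //.
exists (fun r => (Ordinal (blk_lt r), Ordinal (inn_lt r))) => [[j c] _|r _].
  by congr pair; apply: val_inj; rewrite /= ?mk_div ?mk_mod.
by apply: val_inj; rewrite /= -divn_eq.
Qed.

Lemma blk_mk (t n : nat) (j : 'I_t) (c : 'I_n) : Ordinal (blk_lt (mk j c)) = j.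
Proof. by apply: val_inj; rewrite /= mk_div. Qed.
Lemma inn_mk (t n : nat) (j : 'I_t) (c : 'I_n) : Ordinal (inn_lt (mk j c)) = c.
Proof. by apply: val_inj; rewrite /= mk_mod. Qed.

Lemma pq_eq (t n : nat) (p q : 'I_(t * n)) :
  (p == q) = (Ordinal (blk_lt p) == Ordinal (blk_lt q)) && (Ordinal (inn_lt p) == Ordinal (inn_lt q)).
Proof.
apply/eqP/andP => [->|[/eqP E1 /eqP E2]]; first by rewrite !eqxx.
apply: val_inj => /=; rewrite (divn_eq p n) (divn_eq q n).
by move: E1 E2 => [->] [->].
Qed.

Theorem lemma3p2 (n k : nat) (W : 'M[int]_n) (t : nat) (L : 'M['I_t]_t) :
  is_weighing W k -> (n <= t)%N -> latin_square L ->
  is_weighing (blockW W L) (k ^ 2).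
Proof.
move=> [Hent H] hnt [Lr Lc]; have HT := col_orth H.
split.
  move=> p q; rewrite mxE CmatE; case: insub => [x|]; last by rewrite !inE eqxx !orbT.
  move: (Hent (Ordinal (inn_lt p)) x) (Hent (Ordinal (inn_lt q)) x).
  by rewrite !inE => /or3P[]/eqP-> /or3P[]/eqP->.
apply/matrixP => p q; rewrite !mxE (sum_split (fun r => blockW W L p r * (blockW W L)^T r q)).
under eq_bigr => j _ do under eq_bigr => c _ do rewrite !mxE !blk_mk !inn_mk.
under eq_bigr => j _ do rewrite (key _ _ _ _ HT).
rewrite pq_eq.
set i := Ordinal (blk_lt p); set i' := Ordinal (blk_lt q).
set a := Ordinal (inn_lt p); set b := Ordinal (inn_lt q).
have [ii|ni] := eqVneq i i'; last first.
  rewrite big1 //= => j _.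
  case: eqP => // /val_inj E; case/eqP: ni.
  have := Lc j (L i j); set S := [set _ | _] => /eqP/cards1P [x Sx].
  have : i \in S by rewrite inE.
  have : i' \in S by rewrite inE E.
  by rewrite Sx !inE => /eqP -> /eqP ->.
rewrite -ii /=.
under eq_bigr => j _ do rewrite eqxx.
have inj : injective (fun j => L i j).
  move=> j1 j2 /= E.
  have := Lr i (L i j1); set S := [set _ | _] => /eqP/cards1P [x Sx].
  have : j1 \in S by rewrite inE.
  have : j2 \in S by rewrite inE E.
  by rewrite Sx !inE => /eqP -> /eqP ->.
pose G (s : nat) := if (insub s : option 'I_n) is Some x then k%:Z * (W a x * W b x) else 0.
rewrite (eq_bigr (fun j => G (L i j))) //.
have R : \sum_j G (L i j) = \sum_(s < t) G s by rewrite [RHS](reindex_inj inj).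
rewrite R.
have R2 : \sum_(s < t) G s = \sum_(s < n) G s.
  rewrite (@big_ord_widen int 0 +%R n t G hnt) [RHS]big_mkcond.
  apply: eq_bigr => s _; case: ltnP => // hs; rewrite /G; case: insubP => // x.
  by rewrite ltnNge hs.
rewrite R2 (eq_bigr (fun x : 'I_n => k%:Z * (W a x * W b x))); last first.
  by move=> x _; rewrite /G valK.
rewrite -big_distrr /=.
have := congr1 (fun M : 'M[int]_n => M a b) H; rewrite !mxE => E.
have E' : \sum_(c < n) W a c * W b c = k%:Z *+ (a == b).
  by rewrite -E; apply: eq_bigr => c _; rewrite mxE.
rewrite E'; case: (a == b); rewrite ?mulr1n ?mulr0n ?mulr0 //.
Qed.
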